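(* Let $\varepsilon>0$, $m>0$, let $\mu,k$ be real functions on $\mathbb{R}^3$ and set $c_1=\frac{15}{m}\mu$, $c_2=\frac{9}{m^2}\big(k-\frac53\mu\big)$. Let $\boldsymbol\alpha(\mathbf{x},\mathbf{y})=\frac{\mathbf{y}-\mathbf{x}}{|\mathbf{y}-\mathbf{x}|^2}\chi_{B_\varepsilon(\mathbf{x})}(\mathbf{y})$ on $\mathbb{R}^3\times\mathbb{R}^3$. For $\mathbf{u}:\mathbb{R}^3\to\mathbb{R}^3$ define $(\mathcal{G}^*_{\boldsymbol\alpha}\mathbf{u})(\mathbf{x},\mathbf{y})=-\big(\mathbf{u}(\mathbf{y})-\mathbf{u}(\mathbf{x})\big)\cdot\boldsymbol\alpha(\mathbf{x},\mathbf{y})$, $(\overline{\mathcal{G}^*_{\boldsymbol\alpha}}\mathbf{u})(\mathbf{x})=-\int_{\mathbb{R}^3}\big(\mathbf{u}(\mathbf{z})-\mathbf{u}(\mathbf{x})\big)\cdot\boldsymbol\alpha(\mathbf{x},\mathbf{z})\,d\mathbf{z}$, $(\mathcal{D}^*_{\boldsymbol\alpha}\mathbf{u})(\mathbf{x},\mathbf{y})=-\big(\mathbf{u}(\mathbf{y})-\mathbf{u}(\mathbf{x})\big)\otimes\boldsymbol\alpha(\mathbf{x},\mathbf{y})$; for a scalar function $\eta$ of two points define $(\mathcal{G}_{\boldsymbol\alpha}\eta)(\mathbf{x})=\int_{\mathbb{R}^3}\big(\eta(\mathbf{y},\mathbf{x})+\eta(\mathbf{x},\mathbf{y})\big)\boldsymbol\alpha(\mathbf{x},\mathbf{y})\,d\mathbf{y}$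 (a scalar function $f$ of one point being treated as $\eta(\mathbf{x},\mathbf{y})=f(\mathbf{x})$), and for a tensor function $\boldsymbol\Psi$ of two points $(\mathcal{D}_{\boldsymbol\alpha}\boldsymbol\Psi)(\mathbf{x})=\int_{\mathbb{R}^3}\big(\boldsymbol\Psi(\mathbf{y},\mathbf{x})+\boldsymbol\Psi(\mathbf{x},\mathbf{y})\big)\boldsymbol\alpha(\mathbf{x},\mathbf{y})\,d\mathbf{y}$. Let $w(r)=1/r^2$ and let $\mathcal{L}$ be $(\mathcal{L}\mathbf{u})(\mathbf{x})=\int_{B_\varepsilon(\mathbf{x})}\big(c_1(\mathbf{x})+c_1(\mathbf{y})\big)w(|\mathbf{y}-\mathbf{x}|)\frac{(\mathbf{y}-\mathbf{x})\otimes(\mathbf{y}-\mathbf{x})}{|\mathbf{y}-\mathbf{x}|^2}\big(\mathbf{u}(\mathbf{y})-\mathbf{u}(\mathbf{x})\big)d\mathbf{y}+\int_{B_\varepsilon(\mathbf{x})}\int_{B_\varepsilon(\mathbf{x})}c_2(\mathbf{x})w(|\mathbf{y}-\mathbf{x}|)w(|\mathbf{z}-\mathbf{x}|)\big((\mathbf{y}-\mathbf{x})\otimes(\mathbf{z}-\mathbf{x})\big)\big(\mathbf{u}(\mathbf{z})-\mathbf{u}(\mathbf{x})\big)d\mathbf{z}d\mathbf{y}+\int_{B_\varepsilon(\mathbf{x})}\int_{B_\varepsilon(\mathbf{y})}c_2(\mathbf{y})w(|\mathbf{y}-\mathbf{x}|)w(|\mathbf{z}-\mathbf{y}|)\big((\mathbf{y}-\mathbf{x})\otimes(\mathbf{z}-\mathbf{y})\big)\big(\mathbf{u}(\mathbf{z})-\mathbf{u}(\mathbf{y})\big)d\mathbf{z}d\mathbf{y}$.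 Then, with $(c_1\mathcal{G}^*_{\boldsymbol\alpha}\mathbf{u})(\mathbf{x},\mathbf{y})=c_1(\mathbf{x})(\mathcal{G}^*_{\boldsymbol\alpha}\mathbf{u})(\mathbf{x},\mathbf{y})$ and $(c_1(\mathcal{D}^*_{\boldsymbol\alpha}\mathbf{u})^T)(\mathbf{x},\mathbf{y})=c_1(\mathbf{x})(\mathcal{D}^*_{\boldsymbol\alpha}\mathbf{u})(\mathbf{x},\mathbf{y})^T$, $-\mathcal{L}\mathbf{u}=\mathcal{G}_{\boldsymbol\alpha}(c_1\mathcal{G}^*_{\boldsymbol\alpha}\mathbf{u})+\mathcal{G}_{\boldsymbol\alpha}(c_2\overline{\mathcal{G}^*_{\boldsymbol\alpha}}\mathbf{u})$, and equivalently $-\mathcal{L}\mathbf{u}=\mathcal{D}_{\boldsymbol\alpha}\big(c_1(\mathcal{D}^*_{\boldsymbol\alpha}\mathbf{u})^T\big)+\mathcal{G}_{\boldsymbol\alpha}(c_2\overline{\mathcal{G}^*_{\boldsymbol\alpha}}\mathbf{u})$.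
   Context: $B_\varepsilon(\mathbf{x})$ is the open ball of radius $\varepsilon$ about $\mathbf{x}$ and $\chi_A$ the indicator of $A$; $(\mathbf{a}\otimes\mathbf{b})\mathbf{c}=\mathbf{a}(\mathbf{b}\cdot\mathbf{c})$. $\mathcal{L}$ is the linearized state-based peridynamics operator for an isotropic heterogeneous solid with bulk modulus $k$ and shear modulus $\mu$. All integrals are assumed to converge. *)

(* Defs.v *)
From HB Require Import structures.
From mathcomp Require Import all_boot all_order all_algebra.
From mathcomp Require Import all_classical all_reals all_analysis.
Set Implicit Arguments. Unset Strict Implicit. Unset Printing Implicit Defensive.
Import Order.TTheory GRing.Theory Num.Theory.
Local Open Scope ring_scope.
Local Open Scope classical_set_scope.

(* Points of R^3 are triples ((x1, x2), x3); R^3 carries the product of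
   three copies of the Lebesgue measure (i.e. Lebesgue measure on R^3).
   Vectors (values of vector fields, differences of points) are given by
   their components, as functions 'I_3 -> R; tensors as 'I_3 -> 'I_3 -> R. *)
Definition pt (R : realType) := ((R * R) * R)%type.

Definition leb3 (R : realType) :=
  ((@lebesgue_measure R \x @lebesgue_measure R) \x @lebesgue_measure R)%E.

Definition coord (R : realType) (p : pt R) (i : 'I_3) : R :=
  match val i with 0 => p.1.1 | 1 => p.1.2 | _ => p.2 end.

Definition dif (R : realType) (y x : pt R) : 'I_3 -> R :=
  fun i => coord y i - coord x i.

Definition dotv (R : realType) (a b : 'I_3 -> R) : R := \sum_(i < 3) a i * b i.
Definition nrm (R : realType) (a : 'I_3 -> R) : R := Num.sqrt (dotv a a).
Definition dist3 (R : realType) (x y : pt R) : R := nrm (dif y x).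

Definition ball3 (R : realType) (eps : R) (x : pt R) : set (pt R) :=
  [set y | dist3 x y < eps].
Definition chi_ball (R : realType) (eps : R) (x y : pt R) : R :=
  if dist3 x y < eps then 1 else 0.

Definition integ (R : realType) (D : set (pt R)) (f : pt R -> R) : R :=
  Rintegral (@leb3 R) D f.

Definition alpha (R : realType) (eps : R) (x y : pt R) : 'I_3 -> R :=
  fun i => dif y x i / (dist3 x y) ^+ 2 * chi_ball eps x y.

Definition Gstar (R : realType) (eps : R) (u : pt R -> 'I_3 -> R) (x y : pt R) : R :=
  - dotv (fun j => u y j - u x j) (alpha eps x y).

Definition Gstarbar (R : realType) (eps : R) (u : pt R -> 'I_3 -> R) (x : pt R) : R :=
  - integ setT (fun z => dotv (fun j => u z j - u x j) (alpha eps x z)).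

Definition Dstar (R : realType) (eps : R) (u : pt R -> 'I_3 -> R) (x y : pt R)
  : 'I_3 -> 'I_3 -> R :=
  fun i j => - ((u y i - u x i) * alpha eps x y j).

Definition Gop (R : realType) (eps : R) (eta : pt R -> pt R -> R) (x : pt R)
  : 'I_3 -> R :=
  fun i => integ setT (fun y => (eta y x + eta x y) * alpha eps x y i).

Definition Dop (R : realType) (eps : R) (Psi : pt R -> pt R -> 'I_3 -> 'I_3 -> R)
  (x : pt R) : 'I_3 -> R :=
  fun i => integ setT (fun y =>
    \sum_(j < 3) (Psi y x i j + Psi x y i j) * alpha eps x y j).

Definition wfun (R : realType) (r : R) : R := 1 / r ^+ 2.

Definition L1_integrand (R : realType) (c1 : pt R -> R) (u : pt R -> 'I_3 -> R)
  (x : pt R) (i : 'I_3) (y : pt R) : R :=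
  (c1 x + c1 y) * wfun (dist3 x y) *
  \sum_(j < 3) (dif y x i * dif y x j / (dist3 x y) ^+ 2) * (u y j - u x j).

Definition L2_integrand (R : realType) (c2 : pt R -> R) (u : pt R -> 'I_3 -> R)
  (x : pt R) (i : 'I_3) (y z : pt R) : R :=
  c2 x * wfun (dist3 x y) * wfun (dist3 x z) *
  \sum_(j < 3) (dif y x i * dif z x j) * (u z j - u x j).

Definition L3_integrand (R : realType) (c2 : pt R -> R) (u : pt R -> 'I_3 -> R)
  (x : pt R) (i : 'I_3) (y z : pt R) : R :=
  c2 y * wfun (dist3 x y) * wfun (dist3 y z) *
  \sum_(j < 3) (dif y x i * dif z y j) * (u z j - u y j).

Definition Lop (R : realType) (eps : R) (c1 c2 : pt R -> R) (u : pt R -> 'I_3 -> R)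
  (x : pt R) : 'I_3 -> R :=
  fun i =>
    integ (ball3 eps x) (L1_integrand c1 u x i)
  + integ (ball3 eps x) (fun y => integ (ball3 eps x) (L2_integrand c2 u x i y))
  + integ (ball3 eps x) (fun y => integ (ball3 eps y) (L3_integrand c2 u x i y)).

Definition c1fun (R : realType) (m : R) (mu : pt R -> R) : pt R -> R :=
  fun x => 15 / m * mu x.
Definition c2fun (R : realType) (m : R) (mu k : pt R -> R) : pt R -> R :=
  fun x => 9 / m ^+ 2 * (k x - 5 / 3 * mu x).

Definition integrable3 (R : realType) (D : set (pt R)) (f : pt R -> R) : Prop :=
  (@leb3 R).-integrable D (EFin \o f).

(* Main.v *)
Require Import Defs.
From HB Require Import structures.
From mathcomp Require Import all_boot all_order all_algebra.
From mathcomp Require Import all_classical all_reals all_analysis.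
Import Order.TTheory GRing.Theory Num.Theory.
Local Open Scope ring_scope.
Local Open Scope classical_set_scope.
Import numFieldNormedType.Exports.
From mathcomp Require Import ring lra.

Lemma mcoord (R : realType) (i : 'I_3) :
  measurable_fun setT (fun p : pt R => Defs.coord p i : R).
Proof.
rewrite /Defs.coord; case: i => [[|[|n]] Hi] /=.
- exact: measurableT_comp measurable_fst measurable_fst.
- exact: measurableT_comp measurable_snd measurable_fst.
- exact: measurable_snd.
Qed.

Lemma mball (R : realType) (eps : R) (x : pt R) : measurable (ball3 eps x).
Proof.
have md : forall j, measurable_fun setT (fun y : pt R => dif y x j * dif y x j).
  move=> j; apply: measurable_realfun.measurable_funM;
  apply: measurable_realfun.measurable_funB => //; exact: mcoord.
have ms : measurable_fun setT (fun y : pt R => dotv (dif y x) (dif y x)).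
  exact: (@measurable_sum _ _ R setT _ _ (fun j y => dif y x j * dif y x j)).
have mf : measurable_fun setT (fun y : pt R => dist3 x y).
  rewrite /dist3 /nrm.
  have msq : measurable_fun setT (@Num.sqrt R).
    apply: measurable_realfun.continuous_measurable_fun.
    exact: sqrt_continuous.
  exact: (measurableT_comp msq ms).
have mc : measurable_fun setT (fun _ : pt R => eps) by exact: measurable_cst.
have := measurable_realfun.measurable_fun_ltr mf mc measurableT (Y := [set true]) I.
rewrite setTI.
by congr measurable; apply/seteqP; split => y /=.
Qed.

Arguments mball {R}.

Section Pw.
Variable R : realType.
Implicit Types x y z : pt R.

Lemma sum3 (F : 'I_3 -> R) : \sum_(j < 3) F j = F (@Ordinal 3 0 isT) + F (@Ordinal 3 1 isT) + F (@Ordinal 3 2 isT).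
Proof.
rewrite !big_ord_recr big_ord0 /= add0r; congr (F _ + F _ + F _); exact/val_inj.
Qed.

Lemma difC x y i : dif x y i = - dif y x i.
Proof. by rewrite /dif opprB. Qed.

Lemma dist3C x y : dist3 y x = dist3 x y.
Proof.
by rewrite /dist3 /nrm /dotv; congr Num.sqrt; apply: eq_bigr => j _; rewrite difC mulrNN.
Qed.

Lemma chiC (eps : R) x y : chi_ball eps y x = chi_ball eps x y.
Proof. by rewrite /chi_ball dist3C. Qed.

Lemma alphaC (eps : R) x y j : alpha eps y x j = - alpha eps x y j.
Proof. by rewrite /alpha difC dist3C chiC !mulNr. Qed.

Lemma point0 : (point : R) = 0.
Proof. by []. Qed.

Lemma in_ball (eps : R) x y : (y \in ball3 eps x) = (dist3 x y < eps).
Proof.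
case H: (dist3 x y < eps); first by apply/mem_set.
by apply/memNset; rewrite /ball3 /= H.
Qed.

Definition hfun (u : pt R -> 'I_3 -> R) (p z : pt R) : R :=
  wfun (dist3 p z) * \sum_(j < 3) dif z p j * (u z j - u p j).

Lemma g_patch (eps : R) u p z :
  dotv (fun j => u z j - u p j) (alpha eps p z) = (hfun u p \_ (ball3 eps p)) z.
Proof.
rewrite patchE point0 in_ball /hfun /dotv /alpha /chi_ball /wfun.
case: (dist3 p z < eps); last by rewrite big1 // => j _; rewrite mulr0 mulr0.
rewrite !sum3; ring.
Qed.

Lemma L2_fact c2 u x i y z :
  L2_integrand c2 u x i y z = (c2 x * wfun (dist3 x y) * dif y x i) * hfun u x z.
Proof. rewrite /L2_integrand /hfun !sum3; ring. Qed.

Lemma L3_fact c2 u x i y z :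
  L3_integrand c2 u x i y z = (c2 y * wfun (dist3 x y) * dif y x i) * hfun u y z.
Proof. rewrite /L3_integrand /hfun !sum3; ring. Qed.

Lemma eta1_pw (eps : R) c1 u x i y :
  (c1 y * Gstar eps u y x + c1 x * Gstar eps u x y) * alpha eps x y i
  = - (L1_integrand c1 u x i \_ (ball3 eps x)) y.
Proof.
rewrite patchE point0 in_ball /Gstar /dotv !sum3 !(alphaC eps x y).
rewrite /alpha /chi_ball /L1_integrand /wfun !sum3.
case: (dist3 x y < eps) => /=; ring.
Qed.

Lemma Psi_pw (eps : R) c1 u x i y :
  \sum_(j < 3) (c1 y * Dstar eps u y x j i + c1 x * Dstar eps u x y j i) * alpha eps x y j
  = (c1 y * Gstar eps u y x + c1 x * Gstar eps u x y) * alpha eps x y i.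
Proof.
rewrite /Gstar /Dstar /dotv !sum3 !(alphaC eps x y); ring.
Qed.

Definition Gint (eps : R) u p := integ setT (fun z => dotv (fun j => u z j - u p j) (alpha eps p z)).

Lemma eta2_pw (eps : R) c2 u x i y :
  (c2 y * Gstarbar eps u y + c2 x * Gstarbar eps u x) * alpha eps x y i
  = - ((fun y => c2 x * wfun (dist3 x y) * dif y x i * Gint eps u x
         + c2 y * wfun (dist3 x y) * dif y x i * Gint eps u y) \_ (ball3 eps x)) y.
Proof.
rewrite patchE point0 in_ball /Gstarbar -/(Gint eps u y) -/(Gint eps u x).
rewrite /alpha /chi_ball /wfun.
case: (dist3 x y < eps) => /=; ring.
Qed.

End Pw.
Arguments hfun {R}.
Arguments Gint {R}.

Lemma hint {R : realType} (eps : R) u p :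
  integrable3 setT (fun z => dotv (fun j => u z j - u p j) (alpha eps p z)) ->
  (@leb3 R).-integrable (ball3 eps p) (EFin \o hfun u p) /\
  integ (ball3 eps p) (hfun u p) = Gint eps u p.
Proof.
have E : (fun z => dotv (fun j => u z j - u p j) (alpha eps p z)) = hfun u p \_ (ball3 eps p).
  by apply/funext => z; rewrite g_patch.
rewrite /integrable3 /Gint E -restrict_EFin => Hi; split.
  exact: (proj2 (integrable_mkcond (mu:=@leb3 R) (EFin \o hfun u p) (mball eps p)) Hi).
by rewrite /integ Rintegral_mkcond.
Qed.

Lemma negint {R : realType} {D : set (pt R)} {f : pt R -> R} :
  integrable3 D f -> measurable D -> integ D (fun y => - f y) = - integ D f.
Proof.
move=> Hi mD; rewrite /integ.
rewrite (_ : (fun y => - f y) = (fun y => -1 * f y)); last first.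
  by apply/funext => y; rewrite mulN1r.
by rewrite RintegralZl // mulN1r.
Qed.

Theorem theorem4p2 (R : realType) (eps m : R) (mu k : pt R -> R)
    (u : pt R -> 'I_3 -> R) :
  0 < eps -> 0 < m ->
  let c1 := c1fun m mu in
  let c2 := c2fun m mu k in
  let eta1 := fun p q : pt R => c1 p * Gstar eps u p q in
  let eta2 := fun p q : pt R => c2 p * Gstarbar eps u p in
  let Psi := fun (p q : pt R) (a b : 'I_3) => c1 p * Dstar eps u p q b a in
  (* "all integrals are assumed to converge" *)
  (forall x i, integrable3 (ball3 eps x) (L1_integrand c1 u x i)) ->
  (forall x i y, integrable3 (ball3 eps x) (L2_integrand c2 u x i y)) ->
  (forall x i, integrable3 (ball3 eps x)
     (fun y => integ (ball3 eps x) (L2_integrand c2 u x i y))) ->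
  (forall x i y, integrable3 (ball3 eps y) (L3_integrand c2 u x i y)) ->
  (forall x i, integrable3 (ball3 eps x)
     (fun y => integ (ball3 eps y) (L3_integrand c2 u x i y))) ->
  (forall x, integrable3 setT
     (fun z => dotv (fun j => u z j - u x j) (alpha eps x z))) ->
  (forall x i, integrable3 setT
     (fun y => (eta1 y x + eta1 x y) * alpha eps x y i)) ->
  (forall x i, integrable3 setT
     (fun y => (eta2 y x + eta2 x y) * alpha eps x y i)) ->
  (forall x i, integrable3 setT
     (fun y => \sum_(j < 3) (Psi y x i j + Psi x y i j) * alpha eps x y j)) ->
  (forall x i, - Lop eps c1 c2 u x i = Gop eps eta1 x i + Gop eps eta2 x i) /\
  (forall x i, - Lop eps c1 c2 u x i = Dop eps Psi x i + Gop eps eta2 x i).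
Proof.
move=> eps0 m0 c1 c2 eta1 eta2 Psi H1 H2 H3 H4 H5 H6 H7 H8 H9.
have A : forall x i, Gop eps eta1 x i = - integ (ball3 eps x) (L1_integrand c1 u x i).
  move=> x i; rewrite /Gop /integ.
  rewrite (@eq_Rintegral _ _ _ (@leb3 R) setT (fun y => - (L1_integrand c1 u x i \_ (ball3 eps x)) y)); last first.
    by move=> y _; exact: eta1_pw.
  rewrite -/(integ _ _) negint //; last first.
    rewrite /integrable3 -restrict_EFin.
    exact: (proj1 (integrable_mkcond (mu:=@leb3 R) (EFin \o L1_integrand c1 u x i) (mball eps x)) (H1 x i)).
  by rewrite /integ -Rintegral_mkcond.
have B : forall x i, Gop eps eta2 x i =
   - (integ (ball3 eps x) (fun y => integ (ball3 eps x) (L2_integrand c2 u x i y))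
    + integ (ball3 eps x) (fun y => integ (ball3 eps y) (L3_integrand c2 u x i y))).
  move=> x i.
  have I2 : forall y, integ (ball3 eps x) (L2_integrand c2 u x i y) =
      c2 x * wfun (dist3 x y) * dif y x i * Gint eps u x.
    move=> y; have [hi he] := hint eps u x (H6 x).
    rewrite /integ (@eq_Rintegral _ _ _ (@leb3 R) (ball3 eps x) (fun z => (c2 x * wfun (dist3 x y) * dif y x i) * hfun u x z)); last first.
      by move=> z _; exact: L2_fact.
    by rewrite (RintegralZl _ _ hi); last exact (mball eps x); congr (_ * _); exact: he.
  have I3 : forall y, integ (ball3 eps y) (L3_integrand c2 u x i y) =
      c2 y * wfun (dist3 x y) * dif y x i * Gint eps u y.
    move=> y; have [hi he] := hint eps u y (H6 y).
    rewrite /integ (@eq_Rintegral _ _ _ (@leb3 R) (ball3 eps y) (fun z => (c2 y * wfun (dist3 x y) * dif y x i) * hfun u y z)); last first.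
      by move=> z _; exact: L3_fact.
    by rewrite (RintegralZl _ _ hi); last exact (mball eps y); congr (_ * _); exact: he.
  rewrite {1 2}/integ -(RintegralD _ (H3 x i) (H5 x i)); last exact (mball eps x).
  rewrite (@eq_Rintegral _ _ _ (@leb3 R) (ball3 eps x) (fun y => c2 x * wfun (dist3 x y) * dif y x i * Gint eps u x
         + c2 y * wfun (dist3 x y) * dif y x i * Gint eps u y)); last first.
    by move=> y _; rewrite I2 I3.
  rewrite Rintegral_mkcond.
  rewrite (@eq_Rintegral _ _ _ (@leb3 R) setT (fun y => - ((eta2 y x + eta2 x y) * alpha eps x y i))); last first.
    by move=> y _; rewrite -[LHS]opprK; congr (- _); symmetry; exact: eta2_pw.
  by rewrite -/(integ _ _) (negint (H8 x i)) // opprK.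
split => x i.
  by rewrite A B /Lop; ring.
have -> : Dop eps Psi x i = Gop eps eta1 x i.
  rewrite /Dop /Gop /integ; apply: eq_Rintegral => y _.
  exact: Psi_pw.
by rewrite A B /Lop; ring.
Qed.
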